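(* Let $q\geq 2$ be an integer and $\theta\in\mathbb{Z}$. If $\theta$ is coprime with $q$, or if $q\mid\theta$, then the map $n\mapsto w_q(n)+\theta n$ is uniformly distributed modulo $q$: for every $x\in\mathbb{Z}$ the set $\{n\in\mathbb{N}: w_q(n)+\theta n\equiv x\pmod q\}$ has natural density $1/q$.
   Context: For an integer $q\geq 2$ and $n\in\mathbb{N}$: $v_q(0)=0$ and, for $n>0$, $v_q(n)=\max\{k: q^k\mid n\}$; $w_q(n)=\sum_{i=0}^n v_q(i)$. The natural density of $T\subseteq\mathbb{N}$ is $\lim_{N\to\infty}|\{n\in T: 0\leq n<N\}|/N$. *)

(* Defs.v *)
From Stdlib Require Import Reals ZArith.
From mathcomp Require Import all_boot.

(* q-adic valuation: v_q(0) = 0, v_q(n) = max {k : q^k | n} for n > 0.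
   For q >= 2 and n > 0 every such k satisfies k <= n, so the max over
   k < n.+1 is the true maximum. *)
Definition vq (q n : nat) : nat :=
  if n == 0 then 0 else \max_(0 <= k < n.+1 | q ^ k %| n) k.

Definition wq (q n : nat) : nat := \sum_(0 <= i < n.+1) vq q i.

Definition has_density (T : nat -> bool) (d : R) : Prop :=
  Un_cv (fun N => Rdiv (INR (count T (iota 0 N))) (INR N)) d.

(* Main.v *)
Require Import Defs.
From Stdlib Require Import Reals ZArith Znumtheory Lia Lra Psatz.
From mathcomp Require Import all_boot zify.
Local Open Scope nat_scope.

Section V.
Variable q : nat.
Hypothesis hq : 2 <= q.

Lemma vq_dvd n : q ^ vq q n %| n.
Proof.
rewrite /vq; case: eqP => [->|_]; first by rewrite dvdn0.
apply: (big_ind (fun v => q ^ v %| n)) => //.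

by move=> a b Ha Hb; rewrite /maxn; case: ifP.
Qed.

Lemma ltn_expq k : k < q ^ k.
Proof.
elim: k => [|k IH]; first by rewrite expn0.
rewrite expnS; nia.
Qed.

Lemma vq_max n k : 0 < n -> q ^ k %| n -> k <= vq q n.
Proof.
move=> n0 hd; rewrite /vq; case: eqP => [e|_]; first by rewrite e in n0.
apply: (leq_bigmax_seq k) => //.
rewrite mem_index_iota /=.
have := dvdn_leq n0 hd; have := ltn_expq k; lia.
Qed.

Lemma vq_ndvd n : ~~ (q %| n) -> vq q n = 0.
Proof.
move=> h; have := vq_dvd n; case: (vq q n) => // v.
rewrite expnS => /(dvdn_trans (dvdn_mulr _ (dvdnn q))) => hh.
by rewrite hh in h.
Qed.

Lemma vq_mul m : 0 < m -> vq q (q * m) = (vq q m).+1.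
Proof.
move=> m0.
have qm0 : 0 < q * m by rewrite muln_gt0 m0 andbT; lia.
apply/eqP; rewrite eqn_leq; apply/andP; split; last first.
  by apply: vq_max => //; rewrite expnS dvdn_pmul2l ?vq_dvd //; lia.
have := vq_dvd (q * m); case: (vq q (q*m)) => // u.
rewrite expnS dvdn_pmul2l; last lia.
by move=> h; have := @vq_max m u m0 h.
Qed.

Lemma wqS n : wq q n.+1 = wq q n + vq q n.+1.
Proof. by rewrite /wq big_nat_recr. Qed.

Lemma wq0 : wq q 0 = 0.
Proof. by rewrite /wq big_nat1 /vq. Qed.

Lemma wq_in m r : r < q -> wq q (q * m + r) = wq q (q * m).
Proof.
elim: r => [|r IH] hr; first by rewrite addn0.
rewrite addnS wqS IH; last lia.
rewrite vq_ndvd ?addn0 //.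
rewrite -addnS dvdn_addr ?dvdn_mulr //.
apply/negP => /(dvdn_leq (ltn0Sn r)); lia.
Qed.

Lemma wq_qm m : wq q (q * m) = m + wq q m.
Proof.
elim: m => [|m IH]; first by rewrite muln0 wq0.
have -> : q * m.+1 = (q * m + q.-1).+1 by lia.
rewrite wqS wq_in; last lia.
have -> : (q * m + q.-1).+1 = q * m.+1 by lia.
rewrite vq_mul // IH wqS; lia.
Qed.

Lemma wq_block m r : r < q -> wq q (q * m + r) = m + wq q m.
Proof. by move=> hr; rewrite wq_in // wq_qm. Qed.
End V.
Lemma count_blocks (T : nat -> bool) L c :
  (forall j, count T (iota (L*j) L) = c) -> forall j, count T (iota 0 (L*j)) = c * j.
Proof.
move=> h; elim=> [|j IH]; first by rewrite muln0 muln0.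
by rewrite mulnS addnC iotaD count_cat IH add0n h; lia.
Qed.

Lemma count_bounds (T : nat -> bool) q L c :
  0 < L -> c * q = L -> (forall j, count T (iota (L*j) L) = c) ->
  forall N, N <= q * count T (iota 0 N) + L /\ q * count T (iota 0 N) <= N + q * L.
Proof.
move=> L0 hc h N.
have e : N = L * (N %/ L) + N %% L by rewrite mulnC -divn_eq.
have hr : N %% L < L by rewrite ltn_mod.
set j := N %/ L in e; set r := N %% L in e hr.
rewrite e iotaD count_cat add0n (@count_blocks T L c h).
have := count_size T (iota (L * j) r); rewrite size_iota.
set k := count _ _ => hk.
rewrite -hc in e hr *.
split; nia.
Qed.

Open Scope R_scope.
Lemma density_blocks (T : nat -> bool) q L c :
  (0 < q)%N -> (0 < L)%N -> (c * q)%N = L -> (forall j, count T (iota (L*j)%N L) = c) ->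
  has_density T (/ INR q).
Proof.
move=> q0 L0 hc h eps heps.
have [n0 hn0] := INR_unbounded (INR L / eps).
exists n0.+1 => n hn.
have [h1 h2] := @count_bounds T q L c L0 hc h n.
set k := count T (iota 0 n) in h1 h2 *.
have H1 : INR n <= INR q * INR k + INR L.
  by rewrite -mult_INR -plus_INR; apply: le_INR; apply/leP.
have H2 : INR q * INR k <= INR n + INR q * INR L.
  by rewrite -!mult_INR -plus_INR; apply: le_INR; apply/leP.
have Q0 : Rlt 0 (INR q) by apply: lt_0_INR; apply/ltP.
have Nn : Rlt (INR n0) (INR n) by apply: lt_INR; lia.
have N0 : Rlt 0 (INR n) by have := pos_INR n0; lra.
have HL : Rlt (INR L) (eps * INR n).
  have : INR L / eps * eps = INR L by field; lra.
  nra.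
rewrite /R_dist.
set z := INR k / INR n - / INR q.
have hz : z * (INR q * INR n) = INR q * INR k - INR n by rewrite /z; field; lra.
have QN : 0 < INR q * INR n by apply: Rmult_lt_0_compat.
have hQL : INR q * INR L < eps * (INR q * INR n) by nra.
apply: Rabs_def1.
  apply: (Rmult_lt_reg_r (INR q * INR n)) => //; lra.
apply: (Rmult_lt_reg_r (INR q * INR n)) => //; rewrite hz.
have Q1 : 1 <= INR q by apply: (le_INR 1); lia.
have := pos_INR L => L0'.
have : INR q * INR L >= INR L by nra.
lra.
Qed.
Close Scope R_scope.
Lemma count_coprime (q : nat) (th B : Z) :
  (2 <= q)%N -> Z.gcd th (Z.of_nat q) = 1%Z ->
  count (fun r => Z.eqb ((B + th * Z.of_nat r) mod Z.of_nat q) 0) (iota 0 q) = 1%N.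
Proof.
move=> hq hg.
have [u v huv] := Zis_gcd_bezout _ _ _ (eq_ind _ (Zis_gcd th (Z.of_nat q)) (Zgcd_is_gcd th (Z.of_nat q)) _ hg).
have qp : (0 < Z.of_nat q)%Z by move/leP: hq; lia.
have qn : Z.of_nat q <> 0%Z by lia.
set r0 := Z.to_nat ((- u * B) mod Z.of_nat q).
have hb := Z.mod_pos_bound (- u * B) _ qp.
have r0q : (r0 < q)%N by apply/ltP; rewrite /r0; lia.
have -> : 1%N = count (pred1 r0) (iota 0 q) by rewrite (count_uniq_mem r0 (iota_uniq 0 q)) mem_iota add0n r0q.
apply: eq_in_count => r; rewrite mem_iota add0n => /ltP rq /=.
apply/idP/idP.
- move/Z.eqb_eq/(Z.mod_divide _ _ qn) => [k hk].
  apply/eqP; rewrite /r0.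
  have e : (- u * B = Z.of_nat q * (- (u * k + Z.of_nat r * v)) + Z.of_nat r)%Z.
    have : (Z.of_nat r = Z.of_nat r * (u * th + v * Z.of_nat q))%Z by rewrite huv; ring.
    nia.
  rewrite -(Z.mod_unique _ _ _ _ _ e); first lia.
  left; lia.
- move/eqP => ->; apply/Z.eqb_eq/(Z.mod_divide _ _ qn).
  have hd := Z.div_mod (- u * B) _ qn.
  set d := ((- u * B) / Z.of_nat q)%Z in hd.
  exists (v * B - th * d)%Z.
  rewrite /r0 Z2Nat.id; last lia.
  have : (B = B * (u * th + v * Z.of_nat q))%Z by rewrite huv; ring.
  nia.
Qed.

Definition Tt (q : nat) (th x : Z) (n : nat) : bool :=
  Z.eqb (Z.modulo (Z.of_nat (wq q n) + th * Z.of_nat n - x) (Z.of_nat q)) 0%Z.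

Lemma block_count (q : nat) (th x : Z) j :
  (2 <= q)%N -> Z.gcd th (Z.of_nat q) = 1%Z ->
  count (Tt q th x) (iota (q * j) q) = 1%N.
Proof.
move=> hq hg.
rewrite -(addn0 (q * j)) iotaDl count_map.
rewrite -(@count_coprime q th (Z.of_nat (j + wq q j) + th * Z.of_nat (q * j) - x)%Z hq hg).
apply: eq_in_count => r; rewrite mem_iota ?add0n => rq /=.
rewrite /Tt wq_block //.
all: try (move/ltP: rq; lia).

have -> : Z.of_nat (q * j + r) = (Z.of_nat (q * j) + Z.of_nat r)%Z by lia.
by rewrite Z.mul_add_distr_l; congr (Z.eqb (Z.modulo _ _) _); ring.
Qed.

Lemma count_div (q : nat) (U : pred nat) a b : (0 < q)%N ->
  count (fun n => U (n %/ q)) (iota (q * a) (q * b)) = (q * count U (iota a b))%N.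
Proof.
move=> q0; elim: b => [|b IH]; first by rewrite muln0.
rewrite mulnS addnC iotaD count_cat IH -addn1 iotaD count_cat /= addn0.
rewrite -mulnDr -(addn0 (q * (a + b))) iotaDl count_map.
rewrite (@eq_in_count _ _ (fun _ => U (a + b)) (iota 0 q)); last first.
  move=> r; rewrite mem_iota ?add0n => rq /=.
  rewrite /= mulnC divnMDl // divn_small ?addn0 //; move/andP: rq => [_]; rewrite ?add0n.
case: (U (a + b)); first by rewrite count_predT size_iota; lia.
by rewrite count_pred0; lia.
Qed.

Theorem proposition3p4 (q : nat) (theta : Z) :
  (2 <= q)%nat ->
  (Z.gcd theta (Z.of_nat q) = 1%Z \/ Z.divide (Z.of_nat q) theta) ->
  forall x : Z,
    has_density
      (fun n : nat =>
         Z.eqb (Z.modulo (Z.of_nat (wq q n) + theta * Z.of_nat n - x) (Z.of_nat q)) 0%Z)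
      (Rinv (INR q)).
Proof.
move=> hq [hg|[t ht]] x.
  apply: (@density_blocks _ q q 1%N); try lia.
  by move=> j; exact: (@block_count q theta x j hq hg).
apply: (@density_blocks _ q (q * q) q); try lia.
have qn : Z.of_nat q <> 0%Z by lia.
move=> j.
have E : forall n, Tt q theta x n = Tt q 1 x (n %/ q).
  move=> n; rewrite /Tt.
  have e : n = (q * (n %/ q) + n %% q)%N by rewrite mulnC -divn_eq.
  rewrite {1 2}e wq_block //; last by rewrite ltn_mod; lia.
  rewrite -e ht.
  have -> : (Z.of_nat (n %/ q + wq q (n %/ q)) + t * Z.of_nat q * Z.of_nat n - x
     = (Z.of_nat (wq q (n %/ q)) + 1 * Z.of_nat (n %/ q) - x) + (t * Z.of_nat n) * Z.of_nat q)%Z.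
    have -> : Z.of_nat (n %/ q + wq q (n %/ q)) = (Z.of_nat (n %/ q) + Z.of_nat (wq q (n %/ q)))%Z by lia.
    ring.
  by rewrite Z.mod_add.
rewrite (eq_count E) -mulnA (@count_div q (Tt q 1 x) (q * j) q); last lia.
rewrite block_count //.
  by rewrite muln1.
exact: Z.gcd_1_l.
Qed.
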